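(* Over $R=\mathbb{F}_2$ with $F=\hat{\mathbb{G}}_a$ and $G=\hat{\mathbb{G}}_m$, let $i\ne j$. In order for the class $c\,a_ia_j$ (with coefficient $c$) to extend to a multiplicative cocycle, it is necessary that $c^2=0$.
   Context: $\hat{\mathbb{G}}_a$ is the formal group law $x+y$ and $\hat{\mathbb{G}}_m$ is $x+y+xy$. The Lubin–Tate cohomology $H^*(F;G)(R)$ is the cohomology of the complex of power series $F^{\times n}\to G$ with the alternating coboundary built from the group laws. Filtering by leading total degree gives the tangent spectral sequence $H^*(\hat{\mathbb{G}}_a;\hat{\mathbb{G}}_a)(R)\Rightarrow H^*(\hat{\mathbb{G}}_a;\hat{\mathbb{G}}_m)(R)$; ''extending to a multiplicative cocycle'' means being the leading (lowest-degree homogeneous) additive part of a multiplicative cocycle, i.e. surviving this spectral sequence. Over $\mathbb{F}_2$, $a_i\in H^1(\hat{\mathbb{G}}_a;\hat{\mathbb{G}}_a)$ is the class of $x^{2^i}$ and $a_ia_j\in H^2$ is the class of $x^{2^i}y^{2^j}$. *)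

(* Defs.v *)
(* Power series over F_2 are represented by their coefficient
   functions: ps1 = one variable, ps2 = two variables (x,y), ps3 = three (x,y,z). *)
From mathcomp Require Import all_boot all_order all_algebra.
Set Implicit Arguments. Unset Strict Implicit. Unset Printing Implicit Defensive.
Import GRing.Theory.
Local Open Scope ring_scope.

Definition ps1 := nat -> 'F_2.
Definition ps2 := nat -> nat -> 'F_2.
Definition ps3 := nat -> nat -> nat -> 'F_2.

(* Substitutions of the additive formal group law into a 2-variable series f:
   f(y,z), f(x+y,z), f(x,y+z), f(x,y), as 3-variable series. *)
Definition sub_y_z (f : ps2) : ps3 := fun a b c => if a == 0%N then f b c else 0.
Definition sub_xpy_z (f : ps2) : ps3 :=
  fun a b c => ('C(a + b, a))%:R * f (a + b)%N c.
Definition sub_x_ypz (f : ps2) : ps3 :=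
  fun a b c => ('C(b + c, b))%:R * f a (b + c)%N.
Definition sub_x_y (f : ps2) : ps3 := fun a b c => if c == 0%N then f a b else 0.

Definition mul3 (p q : ps3) : ps3 := fun a b c =>
  \sum_(a1 < a.+1) \sum_(b1 < b.+1) \sum_(c1 < c.+1)
     p a1 b1 c1 * q (a - a1)%N (b - b1)%N (c - c1)%N.

Definition gm_add3 (p q : ps3) : ps3 := fun a b c => p a b c + q a b c + mul3 p q a b c.

(* P is a 2-cocycle in C^*(Ga; Gm): the alternating coboundary
   P(y,z) -_m P(x+y,z) +_m P(x,y+z) -_m P(x,y) vanishes, i.e.
   P(y,z) +_m P(x,y+z) = P(x+y,z) +_m P(x,y). *)
Definition mult_cocycle2 (P : ps2) : Prop :=
  forall a b c, gm_add3 (sub_y_z P) (sub_x_ypz P) a b c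
              = gm_add3 (sub_xpy_z P) (sub_x_y P) a b c.

Definition add_cobound1 (g : ps1) : ps2 := fun a b =>
  (if a == 0%N then g b else 0) - ('C(a + b, a))%:R * g (a + b)%N
  + (if b == 0%N then g a else 0).

Definition mono2 (c : 'F_2) (m n : nat) : ps2 :=
  fun a b => if (a == m) && (b == n) then c else 0.

(* c a_i a_j extends to a multiplicative cocycle: there is a multiplicative
   2-cocycle P whose terms of total degree <= d := 2^i + 2^j are exactly a
   representative  c x^(2^i) y^(2^j) + delta_add(g)  (g homogeneous of degree d)
   of the class c a_i a_j in H^2(Ga;Ga). *)
Definition extends_to_mult_cocycle (c : 'F_2) (i j : nat) : Prop :=
  exists P : ps2, mult_cocycle2 P /\
    exists g : ps1, (forall k, k != (2 ^ i + 2 ^ j)%N -> g k = 0) /\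
      forall a b, (a + b <= 2 ^ i + 2 ^ j)%N ->
        P a b = mono2 c (2 ^ i) (2 ^ j) a b + add_cobound1 g a b.

(* Main.v *)
Require Import Defs.
From mathcomp Require Import all_boot all_order all_algebra.
From mathcomp Require Import zify.
Import GRing.Theory.
Local Open Scope ring_scope.

Lemma F2cases (x : 'F_2) : x = 0 \/ x = 1.
Proof. case: x => [[|[|n]] H]; [left|right|]; try exact: val_inj. by []. Qed.

Lemma sum_delta n k (F : nat -> 'F_2) :
  \sum_(i < n) (if (i : nat) == k then F i else 0) = if (k < n)%N then F k else 0.
Proof.
elim: n => [|n IH]; first by rewrite big_ord0.
rewrite big_ord_recr /= IH.
case: eqP => [->|ne]; first by rewrite ltnn ltnSn add0r.
have -> : (k < n.+1)%N = (k < n)%N by apply/idP/idP; lia.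
by rewrite addr0.
Qed.

Lemma sum_if (n : nat) (b : bool) (F : 'I_n -> 'F_2) :
  \sum_(i < n) (if b then F i else 0) = if b then \sum_(i < n) F i else 0.
Proof. by case: b => //; rewrite big1. Qed.

Lemma binF2 n k : ('C(n, k)%:R : 'F_2) = (('X + 1 : {poly 'F_2}) ^+ n)`_k.
Proof.
rewrite exprD1n coef_sum.
under eq_bigr => i _ do rewrite coefMn coefXn.
have -> : \sum_(i < n.+1) ((k == i)%:R *+ 'C(n, i) : 'F_2)
   = \sum_(i < n.+1) (if (i : nat) == k then ('C(n, i))%:R else 0).
  apply: eq_bigr => i _; rewrite eq_sym; case: eqP => _; by rewrite ?mulr1n ?mul0rn.
rewrite (sum_delta _ _ (fun i => ('C(n, i))%:R)) ltnS; case: leqP => // h.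
by rewrite bin_small.
Qed.

Lemma two0 (x : {poly 'F_2}) : x *+ 2 = 0.
Proof. rewrite -mulr_natl -polyC_natr. have -> : (2%:R : 'F_2) = 0 by exact: pchar_Fp_0. by rewrite polyC0 mul0r. Qed.

Lemma pow2X e : ('X + 1 : {poly 'F_2}) ^+ (2 ^ e) = 'X^(2 ^ e) + 1.
Proof.
elim: e => [|e IH]; first by rewrite expn0 expr1.
rewrite expnS mulnC !exprM IH sqrrD two0 addr0 expr1n.
by rewrite -exprM.
Qed.

Lemma binPow2 e k : ('C(2 ^ e, k)%N%:R : 'F_2) = (k == 2 ^ e)%N%:R + (k == 0)%N%:R.
Proof. by rewrite binF2 pow2X coefD coefXn coef1. Qed.

Lemma binTwo x y k : ('C(2 ^ x + 2 ^ y, k)%N%:R : 'F_2) =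
  (k == 2 ^ x + 2 ^ y)%N%:R + (k == 2 ^ x)%N%:R + (k == 2 ^ y)%N%:R + (k == 0)%N%:R.
Proof.
rewrite binF2 exprD !pow2X mulrDl !mulrDr !mul1r mulr1 -exprD.
by rewrite !coefD !coefXn coef1 !addrA.
Qed.

Lemma bin2w e : ('C(2 ^ e + 2 ^ e, 2 ^ e)%N%:R : 'F_2) = 0.
Proof.
rewrite addnn -mul2n -expnS binPow2.
have -> : (2 ^ e == 2 ^ e.+1)%N = false by rewrite eqn_exp2l // ltn_eqF.
have -> : (2 ^ e == 0)%N = false by rewrite expn_eq0.
by rewrite addr0.
Qed.

Lemma natb_mul (b1 b2 : bool) : (b1%:R * b2%:R : 'F_2) = (b1 && b2)%:R.
Proof. by case: b1; case: b2; rewrite ?mul0r ?mul1r. Qed.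

Section Prod.
Variables (P : ps2) (u v : nat).
Hypothesis H1 : forall a b, (a + b < u + v)%N -> P a b = 0.
Hypothesis H2 : forall a b, (a + b)%N = (u + v)%N -> P a b = ((a == u) && (b == v))%:R.

Lemma prodP x1 y1 x2 y2 : (x1 + y1 + (x2 + y2))%N = (2 * (u + v))%N ->
  P x1 y1 * P x2 y2 = (((x1 == u) && (y1 == v)) && ((x2 == u) && (y2 == v)))%:R.
Proof.
move=> hs.
case: (ltngtP (x1 + y1) (u + v)) => h.
- rewrite H1 // mul0r.
  have -> : (x1 == u) && (y1 == v) = false by lia. by [].
- rewrite (H1 x2 y2) ?mulr0; last by lia.
  have -> : (x2 == u) && (y2 == v) = false by lia. by rewrite andbF.
- by rewrite H2 // H2 ?natb_mul //; lia.
Qed.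

Lemma M1eq a b c : (a + b + c)%N = (2 * (u + v))%N ->
  mul3 (sub_y_z P) (sub_x_ypz P) a b c =
  if [&& (u <= b)%N, (v <= c)%N, a == u & (b - u + (c - v) == v)%N]
  then ('C(b - u + (c - v), b - u))%:R else 0.
Proof.
move=> hs.
pose T : 'F_2 := if [&& (u <= b)%N, (v <= c)%N, a == u & (b - u + (c - v) == v)%N]
  then ('C(b - u + (c - v), b - u))%:R else 0.
rewrite /mul3.
transitivity (\sum_(a1 < a.+1) if (a1 : nat) == 0%N then
   (\sum_(b1 < b.+1) if (b1 : nat) == u then
      (\sum_(c1 < c.+1) if (c1 : nat) == v then T else 0) else 0) else 0).
  apply: eq_bigr => a1 _; rewrite -!sum_if; apply: eq_bigr => b1 _.
  rewrite -!sum_if; apply: eq_bigr => c1 _.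
  have hb1 := ltn_ord b1; have hc1 := ltn_ord c1.
  rewrite /sub_y_z /sub_x_ypz.
  case: eqP => [ha1|ha1]; last by rewrite mul0r.
  rewrite ha1 subn0 mulrCA prodP; last by lia.
  rewrite /T.
  case: eqP => [hb|hb]; last by rewrite /= mulr0.
  case: eqP => [hc|hc]; last by rewrite /= mulr0.
  rewrite hb hc /=.
  have hu : (u <= b)%N by lia. have hv : (v <= c)%N by lia.
  rewrite hu hv /=.
  by case: (a == u) => /=; case: (b - u + (c - v) == v)%N; rewrite ?mulr1 ?mulr0.
rewrite (sum_delta _ _ (fun _ => _)) /=.
rewrite (sum_delta _ _ (fun _ => _)) /=.
rewrite (sum_delta _ _ (fun _ => _)) /= !ltnS /T.
by case: (u <= b)%N; case: (v <= c)%N.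
Qed.

Lemma M2eq a b c : (a + b + c)%N = (2 * (u + v))%N ->
  mul3 (sub_xpy_z P) (sub_x_y P) a b c =
  if [&& (u <= a)%N, (v <= b)%N, c == v & (a - u + (b - v) == u)%N]
  then ('C(a - u + (b - v), a - u))%:R else 0.
Proof.
move=> hs.
pose T : 'F_2 := if [&& (u <= a)%N, (v <= b)%N, c == v & (a - u + (b - v) == u)%N]
  then ('C(a - u + (b - v), a - u))%:R else 0.
rewrite /mul3.
transitivity (\sum_(a1 < a.+1) if (a1 : nat) == (a - u)%N then
   (\sum_(b1 < b.+1) if (b1 : nat) == (b - v)%N then
      (\sum_(c1 < c.+1) if (c1 : nat) == c then T else 0) else 0) else 0).
  apply: eq_bigr => a1 _; rewrite -!sum_if; apply: eq_bigr => b1 _.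
  rewrite -!sum_if; apply: eq_bigr => c1 _.
  have ha1 := ltn_ord a1; have hb1 := ltn_ord b1; have hc1 := ltn_ord c1.
  have hc : (c - c1 == 0)%N = ((c1 : nat) == c) by apply/idP/idP; lia.
  rewrite /sub_xpy_z /sub_x_y hc.
  case: (eqVneq (c1 : nat) c) => [hcc|hcc]; last by rewrite mulr0 !if_same.
  rewrite hcc -mulrA prodP; last by lia.
  set B := (X in _ * X%:R).
  case: (eqVneq (a1 : nat) (a - u)%N) => [ha|ha]; last first.
    by rewrite (_ : B = false) ?mulr0 // /B; lia.
  case: (eqVneq (b1 : nat) (b - v)%N) => [hb|hb]; last first.
    by rewrite (_ : B = false) ?mulr0 // /B; lia.
  rewrite (_ : B = [&& (u <= a)%N, (v <= b)%N, c == v & (a - u + (b - v) == u)%N]);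
    last by rewrite /B; lia.
  rewrite ha hb /T.
  by case: ifP; rewrite ?mulr1 ?mulr0.
rewrite (sum_delta _ _ (fun _ => _)) /=.
rewrite (sum_delta _ _ (fun _ => _)) /=.
rewrite (sum_delta _ _ (fun _ => _)) /= !ltnS /T.
by rewrite !leq_subr leqnn.
Qed.

End Prod.

Lemma binC m n : 'C(m + n, m) = 'C(m + n, n).
Proof. by rewrite -(bin_sub (leq_addl m n)) addnK. Qed.

Lemma F2bf (al A B C D : 'F_2) :
  0 * C + 0 = al * A + 1 -> al * B + 0 = al * A + 0 -> al * B + 0 = 0 * D + 0 -> False.
Proof.
rewrite !mul0r.
case: (F2cases al) => ->; case: (F2cases A) => ->; case: (F2cases B) => ->;
 move=> /eqP h1 /eqP h2 /eqP h3; by move: h1 h2 h3; vm_compute.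
Qed.

Lemma F2bf2 (al A B C D : 'F_2) :
  0 * C + 0 = al * A + 0 -> al * B + 0 = al * A + 0 -> al * B + 1 = 0 * D + 0 -> False.
Proof.
rewrite !mul0r.
case: (F2cases al) => ->; case: (F2cases A) => ->; case: (F2cases B) => ->;
 move=> /eqP h1 /eqP h2 /eqP h3; by move: h1 h2 h3; vm_compute.
Qed.

Lemma contra (P : ps2) (x y : nat) : x != y -> mult_cocycle2 P ->
  (forall a b, (a + b < 2 ^ x + 2 ^ y)%N -> P a b = 0) ->
  (forall a b, (a + b)%N = (2 ^ x + 2 ^ y)%N -> P a b = ((a == 2 ^ x)%N && (b == 2 ^ y)%N)%:R) ->
  False.
Proof.
move=> hxy hcoc H1 H2.
have hu0 : (0 < 2 ^ x)%N by rewrite expn_gt0.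
have hv0 : (0 < 2 ^ y)%N by rewrite expn_gt0.
have hbu := bin2w x; have hbv := bin2w y.
have hlt : (x < y)%N \/ (y < x)%N by lia.
have hord : ((x < y)%N -> (2 * 2 ^ x <= 2 ^ y)%N) /\ ((y < x)%N -> (2 * 2 ^ y <= 2 ^ x)%N).
  by split => h; rewrite -expnS leq_exp2l.
move: (2 ^ x)%N (2 ^ y)%N hu0 hv0 hbu hbv hord H1 H2 => u v hu0 hv0 hbu hbv hord H1 H2.
have E : forall a b c, (0 < a)%N -> (0 < b)%N -> (0 < c)%N ->
    (a + b + c)%N = (2 * (u + v))%N ->
  ('C(b + c, b))%:R * P a (b + c)%N +
    (if [&& (u <= b)%N, (v <= c)%N, a == u & (b - u + (c - v) == v)%N]
     then ('C(b - u + (c - v), b - u))%:R else 0)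
  = ('C(a + b, a))%:R * P (a + b)%N c +
    (if [&& (u <= a)%N, (v <= b)%N, c == v & (a - u + (b - v) == u)%N]
     then ('C(a - u + (b - v), a - u))%:R else 0).
  move=> a b c ha hb hc hs.
  have := hcoc a b c.
  rewrite /gm_add3 (@M1eq P u v H1 H2 a b c hs) (@M2eq P u v H1 H2 a b c hs) /sub_y_z /sub_x_y /sub_x_ypz /sub_xpy_z.
  by rewrite (gtn_eqF ha) (gtn_eqF hc) add0r addr0.
case: hlt => hlt.
- have h2 := (proj1 hord) hlt.
  have [h2'|h2'] : (2 * u = v)%N \/ (2 * u < v)%N by lia.
  +
    move: (E v v v hv0 hv0 hv0 ltac:(lia)).
    case: ifP => [h|_]; first by move=> _; lia.
    case: ifP => [_|h]; last by move=> _; lia.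
    rewrite (_ : (v - u + (v - v))%N = u); last by lia.
    rewrite (_ : (v - u)%N = u); last by lia.
    rewrite binn hbv !mul0r => /eqP; by vm_compute.
  + have hs0 : (0 < u + u)%N by lia.
    have e1 := E (u + u)%N v v hs0 hv0 hv0 ltac:(lia).
    have e2 := E v (u + u)%N v hv0 hs0 hv0 ltac:(lia).
    have e3 := E v v (u + u)%N hv0 hv0 hs0 ltac:(lia).
    move: e1; case: ifP => [h|_]; first by move=> _; lia.
    case: ifP => [_|h]; last by move=> _; lia.
    rewrite (_ : (u + u - u + (v - v))%N = u); last by lia.
    rewrite (_ : (u + u - u)%N = u); last by lia.
    rewrite binn hbv => e1.
    move: e2; case: ifP => [h|_]; first by move=> _; lia.
    case: ifP => [h|_]; first by move=> _; lia.
    move=> e2.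
    move: e3; case: ifP => [h|_]; first by move=> _; lia.
    case: ifP => [h|_]; first by move=> _; lia.
    rewrite hbv => e3.
    rewrite (addnC v (u + u)%N) -binC in e2 e3.
    move: e1 e2 e3; rewrite ?mulr1n; exact: F2bf.
- have h2 := (proj2 hord) hlt.
  have [h2'|h2'] : (2 * v = u)%N \/ (2 * v < u)%N by lia.
  +
    move: (E u u u hu0 hu0 hu0 ltac:(lia)).
    case: ifP => [_|h]; last by move=> _; lia.
    case: ifP => [h|_]; first by move=> _; lia.
    rewrite subnn bin0 hbu !mul0r => /eqP; by vm_compute.
  + have ht0 : (0 < v + v)%N by lia.
    have e1 := E (v + v)%N u u ht0 hu0 hu0 ltac:(lia).
    have e2 := E u (v + v)%N u hu0 ht0 hu0 ltac:(lia).
    have e3 := E u u (v + v)%N hu0 hu0 ht0 ltac:(lia).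
    move: e1; case: ifP => [h|_]; first by move=> _; lia.
    case: ifP => [h|_]; first by move=> _; lia.
    rewrite hbu => e1.
    move: e2; case: ifP => [h|_]; first by move=> _; lia.
    case: ifP => [h|_]; first by move=> _; lia.
    move=> e2.
    move: e3; case: ifP => [_|h]; last by move=> _; lia.
    case: ifP => [h|_]; first by move=> _; lia.
    rewrite subnn bin0 hbu => e3.
    rewrite (addnC u (v + v)%N) -binC in e2 e3.
    move: e1 e2 e3; rewrite ?mulr1n; exact: F2bf2.
Qed.

Lemma derive (P : ps2) (g : ps1) (p q : nat) : (0 < p)%N -> (0 < q)%N -> p != q ->
  (forall k, ('C(p + q, k))%:R = (k == p + q)%N%:R + (k == p)%N%:R + (k == q)%N%:R + (k == 0)%N%:R :> 'F_2) ->
  (forall k, k != (p + q)%N -> g k = 0) ->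
  (forall a b, (a + b <= p + q)%N -> P a b = mono2 1 p q a b + add_cobound1 g a b) ->
  (forall a b, (a + b < p + q)%N -> P a b = 0) /\
  (forall a b, (a + b)%N = (p + q)%N ->
     P a b = ((a == p) && (b == q))%:R + ((a == p)%:R + (a == q)%:R) * g (p + q)%N).
Proof.
move=> hp hq hpq hbin hg hP; split.
  move=> a b h.
  rewrite hP; last by lia.
  have hgb : g b = 0 by apply: hg; lia.
  have hga : g a = 0 by apply: hg; lia.
  have hgab : g (a + b)%N = 0 by apply: hg; lia.
  rewrite /mono2 /add_cobound1 hgb hga hgab.
  have -> : (a == p) && (b == q) = false by lia.
  by rewrite !if_same mulr0 subr0 !addr0.
move=> a b h.
rewrite hP; last by lia.
rewrite /mono2 /add_cobound1 h hbin.
have E1 : (if a == 0%N then g b else 0) = (a == 0)%N%:R * g (p + q)%N.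
  case: eqP => [ha|ha]; last by rewrite mul0r.
  by rewrite mul1r; congr g; lia.
have E2 : (if b == 0%N then g a else 0) = (a == p + q)%N%:R * g (p + q)%N.
  case: (eqVneq b 0%N) => hb.
    have -> : (a == p + q)%N = true by lia.
    by rewrite mul1r; congr g; lia.
  have -> : (a == p + q)%N = false by lia.
  by rewrite mul0r.
rewrite E1 E2.
move: (a == 0)%N (a == p + q)%N (a == p) (a == q) ((a == p) && (b == q)) (g (p + q)%N)
  => [] [] [] [] [] e; case: (F2cases e) => ->; by apply/eqP; vm_compute.
Qed.

Theorem mainTheorem6 (i j : nat) (c : 'F_2) :
  i != j -> extends_to_mult_cocycle c i j -> c ^+ 2 = 0.
Proof.
move=> hij [P [hcoc [g [hg hP]]]].
case: (F2cases c) => hc; first by rewrite hc expr2 mul0r.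
exfalso; rewrite hc in hP.
have hp0 : (0 < 2 ^ i)%N by rewrite expn_gt0.
have hq0 : (0 < 2 ^ j)%N by rewrite expn_gt0.
have hpq : (2 ^ i)%N != (2 ^ j)%N by rewrite eqn_exp2l.
have [H1 H2] := @derive P g _ _ hp0 hq0 hpq (binTwo i j) hg hP.
case: (F2cases (g (2 ^ i + 2 ^ j)%N)) => he; rewrite he in H2.
  apply: (@contra P i j hij hcoc H1) => a b h.
  by rewrite H2 // mulr0 addr0.
apply: (@contra P j i); first by rewrite eq_sym.
- exact: hcoc.
- by move=> a b h; apply: H1; lia.
move=> a b h.
rewrite H2; last by lia.
have -> : (a == (2 ^ i)%N) && (b == (2 ^ j)%N) = (a == (2 ^ i)%N) by lia.
have -> : (a == (2 ^ j)%N) && (b == (2 ^ i)%N) = (a == (2 ^ j)%N) by lia.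
have : ~~ ((a == (2 ^ i)%N) && (a == (2 ^ j)%N)) by lia.
move: (a == (2 ^ i)%N) (a == (2 ^ j)%N) => [] [] // _; by apply/eqP; vm_compute.
Qed.
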